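(* Let $A$ be a commutative semiring, $\rho$ a congruence on $A$, $(a,b),(c,d)\in A\times A$, and $c=z_1,z_2,\dots,z_n=d$ ($n\ge2$) a sequence of elements of $A$. If $(a,b)\ast(z_i,z_{i+1})\in\rho_+$ for all $i\in\{1,\dots,n-1\}$, then $(a,b)\ast(c,d)\in\rho_+$.
   Context: Semirings are commutative with $0$ and $1\neq0$, $0a=0$; congruences are equivalence relations compatible with $+,\cdot$. Twisted product $(a,b)\ast(c,d)=(ac+bd,ad+bc)$. $\rho_+=\{(u,v):(u+e,v+e)\in\rho$ for some $e\in A\}$. *)

(* Defs.v *)
From HB Require Import structures.
From mathcomp Require Import all_boot all_algebra.
Set Implicit Arguments. Unset Strict Implicit. Unset Printing Implicit Defensive.
Import GRing.Theory.
Local Open Scope ring_scope.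

Definition congruence (A : comNzSemiRingType) (rho : A -> A -> Prop) : Prop :=
  [/\ (forall x, rho x x),
      (forall x y, rho x y -> rho y x),
      (forall x y z, rho x y -> rho y z -> rho x z),
      (forall x y u v, rho x y -> rho u v -> rho (x + u) (y + v)) &
      (forall x y u v, rho x y -> rho u v -> rho (x * u) (y * v))].

Definition twisted (A : comNzSemiRingType) (p q : A * A) : A * A :=
  (p.1 * q.1 + p.2 * q.2, p.1 * q.2 + p.2 * q.1).

Definition rho_plus (A : comNzSemiRingType) (rho : A -> A -> Prop) (p : A * A) : Prop :=
  exists e : A, rho (p.1 + e) (p.2 + e).

(* Main.v *)
Require Import Defs.
From mathcomp Require Import all_boot all_algebra.
From mathcomp Require Import ring.
Import GRing.Theory.
Local Open Scope ring_scope.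

Lemma rp_trans (A : comNzSemiRingType) (rho : A -> A -> Prop) (a b x y w : A) :
  congruence rho ->
  rho_plus rho (twisted (a, b) (x, y)) -> rho_plus rho (twisted (a, b) (y, w)) ->
  rho_plus rho (twisted (a, b) (x, w)).
Proof.
case=> _ _ _ Hadd _ [e He] [f Hf].
exists (b * y + a * y + e + f); rewrite /twisted /=.
have := Hadd _ _ _ _ He Hf; rewrite /twisted /=.
have -> : a * x + b * y + e + (a * y + b * w + f) = a * x + b * w + (b * y + a * y + e + f) by ring.
have -> : a * y + b * x + e + (a * w + b * y + f) = a * w + b * x + (b * y + a * y + e + f) by ring.
by [].
Qed.

Theorem lemma2p22 (A : comNzSemiRingType) (rho : A -> A -> Prop)
  (a b c d : A) (n : nat) (z : nat -> A) :
  congruence rho -> (2 <= n)%N ->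
  z 0%N = c -> z n.-1 = d ->
  (forall i : nat, (i < n.-1)%N -> rho_plus rho (twisted (a, b) (z i, z i.+1))) ->
  rho_plus rho (twisted (a, b) (c, d)).
Proof.
move=> Hc Hn <- <- H.
suff: forall k, (k <= n.-1)%N -> rho_plus rho (twisted (a, b) (z 0%N, z k)).
  by apply.
elim=> [|k IH] Hk.
  exists 0; case: Hc => Hr _ _ _ _; rewrite /twisted /=.
  by rewrite (addrC (a * z 0%N)).
apply: (@rp_trans A rho a b (z 0%N) (z k) (z k.+1) Hc (IH (ltnW Hk))).
exact: H.
Qed.
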